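(* Let $k>1$ and let $f$ be a positive differentiable function on $[0,1]$ such that $f$ is constant or $f$ is non-increasing. Consider the planar system $$\frac{dI}{d\tau}=I\,[f(R)(1-I-R)-k],\qquad \frac{dR}{d\tau}=(k-1)I-R.$$ If $f(0)/k<1$, then the system has no endemic equilibrium points. If $f(0)/k>1$, then the system has a unique endemic equilibrium point, and this endemic equilibrium point is locally stable.
   Context: An endemic equilibrium is an equilibrium point $(I^*,R^* )$ of the system with $I^*>0$. ''Locally stable'' means locally asymptotically stable (both eigenvalues of the Jacobian at the point have negative real part). *)

(* Defs.v *)
From Stdlib Require Import Reals.
From Coquelicot Require Import Coquelicot.
Open Scope R_scope.

Definition dI (f : R -> R) (k i r : R) : R := i * (f r * (1 - i - r) - k).
Definition dR (k i r : R) : R := (k - 1) * i - r.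

(* Biologically meaningful state space (fractions of the population). *)
Definition in_domain (i r : R) : Prop := 0 <= i /\ 0 <= r /\ i + r <= 1.

Definition equilibrium (f : R -> R) (k i r : R) : Prop :=
  in_domain i r /\ dI f k i r = 0 /\ dR k i r = 0.

Definition endemic_equilibrium (f : R -> R) (k i r : R) : Prop :=
  equilibrium f k i r /\ 0 < i.

(* Locally (asymptotically) stable: the Jacobian [[a b];[c d]] of the vector
   field (its partial derivatives) exists at (i,r), and every (complex)
   eigenvalue l, i.e. every root of det(J - l Id) = (a-l)(d-l) - b c, has
   negative real part. *)
Definition locally_stable (f : R -> R) (k i r : R) : Prop :=
  exists a b c d : R,
    derivable_pt_lim (fun x => dI f k x r) i a /\
    derivable_pt_lim (fun y => dI f k i y) r b /\
    derivable_pt_lim (fun x => dR k x r) i c /\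
    derivable_pt_lim (fun y => dR k i y) r d /\
    forall l : C,
      Cminus (Cmult (Cminus (RtoC a) l) (Cminus (RtoC d) l))
             (Cmult (RtoC b) (RtoC c)) = RtoC 0 ->
      Re l < 0.

(* Main.v *)
Require Import Defs.
From Stdlib Require Import Reals.
From Coquelicot Require Import Coquelicot.
From Stdlib Require Import Lra Psatz.
Open Scope R_scope.

Definition posp (x : R) : R := (x + Rabs x) / 2.

Lemma posp_cont : continuity posp.
Proof.
  intro x. unfold posp. apply continuity_pt_div.
  - apply continuity_pt_plus. apply derivable_continuous_pt, derivable_pt_id.
    apply Rcontinuity_abs.
  - apply continuity_pt_const. intros a b; reflexivity.
  - lra.
Qed.

Lemma posp_eq (x : R) : posp x = Rmax 0 x.
Proof.
  unfold posp, Rmax. destruct (Rle_dec 0 x).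
  - rewrite Rabs_right; lra.
  - rewrite Rabs_left; lra.
Qed.

Lemma deriv_sign (f : R -> R) (r l : R) :
  0 <= r < 1 -> derivable_pt_lim f r l ->
  (forall x y, 0 <= x -> x <= y -> y <= 1 -> f y <= f x) -> l <= 0.
Proof.
  intros [h0 h1] hd hm. destruct (Rle_dec l 0) as [|hl]; [assumption|].
  exfalso. assert (lp : 0 < l) by lra.
  destruct (hd l lp) as [[del hdel] H].
  set (h := Rmin (del / 2) ((1 - r) / 2)).
  assert (hh : 0 < h). { unfold h. apply Rmin_pos; lra. }
  assert (hle1 : h <= del / 2) by apply Rmin_l.
  assert (hle2 : h <= (1 - r) / 2) by apply Rmin_r.
  assert (hne : h <> 0) by lra.
  assert (ha : Rabs h < del). { rewrite Rabs_right; lra. }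
  specialize (H h hne ha).
  assert (hf : f (r + h) <= f r) by (apply hm; lra).
  assert (q : (f (r + h) - f r) / h <= 0).
  { unfold Rdiv. apply Rmult_le_0_r; [lra|]. left; apply Rinv_0_lt_compat; lra. }
  apply Rabs_def2 in H. lra.
Qed.

Theorem proposition2 (k : R) (f : R -> R)
  (hk : 1 < k)
  (hpos : forall x, 0 <= x <= 1 -> 0 < f x)
  (hdiff : forall x, 0 <= x <= 1 -> exists l, derivable_pt_lim f x l)
  (hshape : (exists c, forall x, 0 <= x <= 1 -> f x = c) \/
            (forall x y, 0 <= x -> x <= y -> y <= 1 -> f y <= f x)) :
  (f 0 / k < 1 -> forall i r, ~ endemic_equilibrium f k i r) /\
  (f 0 / k > 1 ->
     exists i r, endemic_equilibrium f k i r /\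
       (forall i' r', endemic_equilibrium f k i' r' -> i' = i /\ r' = r) /\
       locally_stable f k i r).
Proof.
  assert (hm : forall x y, 0 <= x -> x <= y -> y <= 1 -> f y <= f x).
  { destruct hshape as [[c hc] | h]; [|exact h].
    intros x y hx hxy hy. rewrite (hc x), (hc y); lra. }
  assert (hchar : forall i r, endemic_equilibrium f k i r ->
            0 < i /\ 0 <= r /\ i + r <= 1 /\ r = (k - 1) * i /\ f r * (1 - i - r) = k).
  { intros i r [[[h1 [h2 h3]] [h4 h5]] h6]. unfold dI in h4. unfold dR in h5.
    apply Rmult_integral in h4. destruct h4 as [h4|h4]; [lra|].
    repeat split; lra. }
  split.
  - intros h0 i r he. destruct (hchar i r he) as [h1 [h2 [h3 [h4 h5]]]].
    assert (f r <= f 0) by (apply hm; lra).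
    assert (0 < f r) by (apply hpos; lra).
    assert (f 0 < k).
    { apply (Rmult_lt_compat_r k) in h0; [|lra].
      unfold Rdiv in h0. rewrite Rmult_assoc, Rinv_l in h0 by lra. lra. }
    nra.
  - intros h0.
    assert (hf0 : k < f 0).
    { apply (Rmult_lt_compat_r k) in h0; [|lra].
      unfold Rdiv in h0. rewrite Rmult_assoc, Rinv_l in h0 by lra. lra. }
    set (a := k / (k - 1)).
    assert (ha : 1 < a).
    { unfold a. apply (Rmult_lt_reg_r (k - 1)); [lra|]. unfold Rdiv.
      rewrite Rmult_assoc, Rinv_l by lra. lra. }
    set (b := / a).
    assert (hb0 : 0 < b) by (unfold b; apply Rinv_0_lt_compat; lra).
    assert (hb1 : b < 1).
    { unfold b. rewrite <- Rinv_1. apply Rinv_lt_contravar; lra. }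
    assert (hab : a * b = 1) by (unfold b; field; lra).
    set (H := fun x => f x * (1 - a * x) - k).
    assert (hdec : forall x y, 0 <= x -> x < y -> 1 - a * y >= 0 -> y <= 1 -> H y < H x).
    { intros x y hx hxy hy hy1. unfold H.
      assert (f y <= f x) by (apply hm; lra).
      assert (0 < f x) by (apply hpos; lra).
      assert (f y * (1 - a * y) <= f x * (1 - a * y)) by (apply Rmult_le_compat_r; lra).
      assert (f x * (a * x) < f x * (a * y)) by (apply Rmult_lt_compat_l; nra).
      nra. }
    assert (hcont : forall x, 0 <= x <= 1 -> continuity_pt H x).
    { intros x hx. unfold H. apply continuity_pt_minus.
      - apply continuity_pt_mult.
        + destruct (hdiff x hx) as [l hl]. apply derivable_continuous_pt.
          exists l; exact hl.
        + apply continuity_pt_minus. apply continuity_pt_const; intros u v; reflexivity.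
          apply continuity_pt_scal. apply derivable_continuous_pt, derivable_pt_id.
      - apply continuity_pt_const; intros u v; reflexivity. }
    set (cl := fun x => b - posp (b - posp x)).
    assert (hcl : forall x, 0 <= cl x <= b).
    { intro x. unfold cl. rewrite !posp_eq. unfold Rmax.
      destruct (Rle_dec 0 x); destruct (Rle_dec 0 _); lra. }
    assert (hcl2 : forall x, 0 <= x <= b -> cl x = x).
    { intros x hx. unfold cl. rewrite !posp_eq. unfold Rmax.
      destruct (Rle_dec 0 x); destruct (Rle_dec 0 _); lra. }
    set (g := fun x => - H (cl x)).
    assert (hgc : continuity g).
    { intro x. unfold g. apply continuity_pt_opp.
      change (fun x0 => H (cl x0)) with (comp H cl).
      apply continuity_pt_comp.
      - unfold cl. apply continuity_pt_minus.
        apply continuity_pt_const; intros u v; reflexivity.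
        change (fun x0 => posp (b - posp x0)) with (comp posp (fun x0 => b - posp x0)).
        apply continuity_pt_comp; [|apply posp_cont].
        apply continuity_pt_minus. apply continuity_pt_const; intros u v; reflexivity.
        apply posp_cont.
      - apply hcont. specialize (hcl x). lra. }
    assert (hH0 : H 0 > 0) by (unfold H; lra).
    assert (hHb : H b = - k).
    { unfold H. rewrite hab. ring. }
    destruct (IVT g 0 b hgc hb0) as [r [hr hgr]].
    { unfold g. rewrite hcl2 by lra. lra. }
    { unfold g. rewrite hcl2 by lra. lra. }
    unfold g in hgr. rewrite hcl2 in hgr by lra.
    assert (hHr : H r = 0) by lra.
    assert (hr0 : 0 < r).
    { destruct (Req_dec r 0) as [e|e]; [|lra]. rewrite e in hHr. lra. }
    assert (hrb : r < b).
    { destruct (Req_dec r b) as [e|e]; [|lra]. rewrite e in hHr. lra. }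
    set (i := r / (k - 1)).
    assert (hi : 0 < i) by (unfold i; apply Rdiv_lt_0_compat; lra).
    assert (hri : r = (k - 1) * i) by (unfold i; field; lra).
    assert (hir : i + r = a * r) by (unfold i, a; field; lra).
    assert (hfr : 0 < f r) by (apply hpos; lra).
    assert (hFr : f r * (1 - i - r) = k).
    { replace (1 - i - r) with (1 - a * r) by lra. unfold H in hHr. lra. }
    assert (hpos1 : 0 < 1 - i - r) by nra.
    assert (hE : endemic_equilibrium f k i r).
    { split; [|exact hi]. split; [unfold in_domain; lra|].
      unfold dI, dR. split; [rewrite hFr; ring | lra]. }
    exists i, r. split; [exact hE|]. split.
    + intros i' r' he. destruct (hchar i' r' he) as [h1 [h2 [h3 [h4 h5]]]].
      assert (hir' : i' + r' = a * r') by (rewrite h4; unfold a; field; lra).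
      assert (hH' : H r' = 0).
      { unfold H. replace (1 - a * r') with (1 - i' - r') by lra. lra. }
      assert (er : r' = r).
      { destruct (Rtotal_order r' r) as [c|[c|c]]; [|exact c|].
        - exfalso. assert (H r < H r') by (apply hdec; lra). lra.
        - exfalso. assert (H r' < H r) by (apply hdec; lra). lra. }
      split; [|assumption].
      rewrite er in h4. unfold i. rewrite h4. field. lra.
    + destruct (hdiff r ltac:(lra)) as [l hl].
      assert (hl0 : l <= 0) by (apply (deriv_sign f r l); [lra|exact hl|exact hm]).
      exists (f r * (1 - i - r) - k + i * (f r * (-1))),
             (i * (l * (1 - i - r) + f r * (-1))), (k - 1), (-1).
      split; [|split; [|split; [|split]]].
      * apply is_derive_Reals. unfold dI. auto_derive; [exact I|]. ring.
      * apply is_derive_Reals. unfold dI.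
        assert (hl' : is_derive f r l) by (apply is_derive_Reals; exact hl).
        auto_derive.
        -- repeat split; exists l; exact hl'.
        -- replace (Derive (fun x : R => f x) r) with l; [ring|]. symmetry; apply is_derive_unique; exact hl'.
      * apply is_derive_Reals. unfold dR. auto_derive; [exact I|]. ring.
      * apply is_derive_Reals. unfold dR. auto_derive; [exact I|]. ring.
      * rewrite hFr. intros [x y] hq.
        unfold Cminus, Cmult, Cplus, Copp, RtoC in hq. simpl in hq.
        injection hq. intros e2 e1. simpl.
        set (A := k - k + i * (f r * -1)) in *.
        set (B := i * (l * (1 - i - r) + f r * -1)) in *.
        assert (hA : A < 0) by (unfold A; nra).
        assert (hD : A * (-1) - B * (k - 1) > 0).
        { unfold B. assert (0 <= - l * (1 - i - r)) by nra.
          assert (0 <= (k - 1) * i * (- l * (1 - i - r))) by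
            (apply Rmult_le_pos; [nra|lra]).
          nra. }
        destruct (Rlt_dec x 0) as [|hx]; [assumption|]. exfalso.
        assert (y = 0) by nra. subst y. nra.
Qed.
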